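(* Let $G$ be a finite group. Then the poset $C(G)$ of cyclic subgroups of $G$ possesses exactly one breaking point if and only if $G$ is either a cyclic group of order $p^2$ for some prime $p$, or a generalized quaternion $2$-group $Q_{2^n}$ for some $n\geq 3$.
   Context: For a finite group $G$, $C(G)$ denotes the set of cyclic subgroups of $G$, partially ordered by inclusion. A breaking point of $C(G)$ is a subgroup $H\in C(G)$ with $H\neq 1$ and $H\neq G$ such that for every $X\in C(G)$ we have $X\leq H$ or $H\leq X$. For $n\geq 3$, the generalized quaternion $2$-group is $Q_{2^n}=\langle a,b \mid a^{2^{n-2}}=b^2,\ a^{2^{n-1}}=1,\ b^{-1}ab=a^{-1}\rangle$, of order $2^n$. *)

(* Defs.v *)
From mathcomp Require Import all_boot all_fingroup all_solvable.
Set Implicit Arguments. Unset Strict Implicit. Unset Printing Implicit Defensive.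
Local Open Scope group_scope.

Definition breaking_point (gT : finGroupType) (G H : {group gT}) : Prop :=
  [/\ H \subset G, cyclic H, H :!=: 1, H :!=: G &
      forall X : {group gT}, X \subset G -> cyclic X ->
        X \subset H \/ H \subset X].

(* Main.v *)
Require Import Defs.
From mathcomp Require Import all_boot all_fingroup all_solvable.
Local Open Scope group_scope.

Section Helpers.
Variable gT : finGroupType.
Implicit Types G H K X : {group gT}.

Lemma ohm_subX (p : nat) G X : p.-group G -> prime p -> #|'Ohm_1(G)| = p ->
  X \subset G -> X :!=: 1 -> 'Ohm_1(G) \subset X.
Proof.
move=> pG pr oO sXG ntX.
have s := OhmS 1 sXG.
have ntO : 'Ohm_1(X) :!=: 1 by rewrite Ohm1_eq1.
have oX : #|'Ohm_1(X)| = p.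
  apply/(prime_nt_dvdP pr); first by rewrite -trivg_card1.
  by rewrite -oO cardSg.
have E : 'Ohm_1(X) :==: 'Ohm_1(G) by rewrite eqEcard s oO oX leqnn.
by rewrite -(eqP E) Ohm_sub.
Qed.

Lemma bp_center G K : breaking_point G K -> K \subset 'Z(G).
Proof.
case=> sKG cK _ _ cmp; rewrite subsetI sKG centsC.
apply/subsetP=> x Gx.
have [xK|xK] := boolP (x \in K).
  by apply: subsetP xK; apply: cyclic_abelian.
have := cmp <[x]>%G; rewrite cycle_subG Gx cycle_cyclic => /(_ isT isT).
case=> [|sKx]; first by rewrite cycle_subG (negPf xK).
rewrite -sub_cent1; apply: subset_trans sKx _; by rewrite cycle_subG cent1id.
Qed.

Lemma bp_ohm (p : nat) G : p.-group G -> prime p -> #|'Ohm_1(G)| = p ->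
  'Ohm_1(G) :!=: G -> breaking_point G 'Ohm_1(G).
Proof.
move=> pG pr oO nOG; split => //.
- exact: Ohm_sub.
- by apply: prime_cyclic; rewrite oO.
- by rewrite trivg_card1 oO; case: p pr {pG oO} => [|[]].
- move=> X sXG _; have [->|ntX] := eqVneq X 1%G; first by left; rewrite sub1G.
  by right; apply: ohm_subX pG pr oO sXG ntX.
Qed.

End Helpers.
Arguments ohm_subX {gT p G X}.
Arguments bp_center {gT G K}.
Arguments bp_ohm {gT p G}.

Theorem mainTheorem3 (gT : finGroupType) (G : {group gT}) :
  (exists H : {group gT},
     breaking_point G H /\
     forall K : {group gT}, breaking_point G K -> K = H)
  <->
  ((exists p : nat, prime p /\ cyclic G /\ #|G| = (p ^ 2)%N)
   \/ (exists n : nat, 3 <= n /\ G \isog 'Q_(2 ^ n))).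
Proof.
split; last first.
  move=> [[p [pr [cG oG]]] | [n [n3 isoG]]].
    have pG : p.-group G by rewrite /pgroup oG pnatX pnat_id.
    have ntG : G :!=: 1.
      by rewrite trivg_card1 oG -(expn0 p) eqn_exp2l ?prime_gt1.
    have oO := Ohm1_cyclic_pgroup_prime cG pG ntG.
    have nOG : 'Ohm_1(G) :!=: G.
      apply/eqP => E; have := congr1 (fun A : {set gT} => #|A|) E.
      by rewrite oO oG; move/eqP; rewrite -{1}(expn1 p) eqn_exp2l ?prime_gt1.
    exists ('Ohm_1(G))%G; split; first exact: (bp_ohm pG pr oO nOG).
    move=> K [sKG cK ntK nKG _]; apply/val_inj/eqP => /=; rewrite eq_sym eqEcard.
    rewrite (ohm_subX pG) //= oO.
    have : #|K| %| p ^ 2 by rewrite -oG cardSg.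
    case/(dvdn_pfactor _ _ pr) => m hm oK; case: m hm oK => [|[|[|m]]] // _ oK.
    - by rewrite trivg_card1 oK in ntK.
    - by rewrite oK expn1.
    - by rewrite eqEcard sKG oK oG leqnn in nKG.
  have oG : #|G| = (2 ^ n)%N by rewrite (card_isog isoG) card_quaternion.
  have pG : 2.-group G by rewrite /pgroup oG pnatX pnat_id.
  have ntG : G :!=: 1.
    by rewrite trivg_card1 oG -(expn0 2) eqn_exp2l //; by case: (n) n3.
  have cls : extremal_class G = Quaternion by apply/quaternion_classP; exists n.
  have oO : #|'Ohm_1(G)| = 2.
    by apply/(prime_Ohm1P pG ntG); rewrite cls eqxx orbT.
  have [[x y] genG _] := generators_quaternion n3 isoG.
  have [_ _ [_ oZ _ _ _] _ _] := quaternion_structure n3 genG isoG.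
  have nOG : 'Ohm_1(G) :!=: G.
    apply/eqP => E; have := congr1 (fun A : {set gT} => #|A|) E.
    by rewrite oO oG; move/eqP; rewrite -{1}(expn1 2) eqn_exp2l //; case: (n) n3 => [|[]].
  exists ('Ohm_1(G))%G; split; first exact: (bp_ohm pG isT oO nOG).
  move=> K bK; have sKZ := bp_center bK; have [sKG _ ntK _ _] := bK.
  apply/val_inj/eqP => /=; rewrite eq_sym eqEcard (ohm_subX pG) //= oO -oZ.
  exact: subset_leq_card.
case=> H [bH uH]; have [sHG cH ntH nHG cmp] := bH.
have elt : forall x, x \in G -> x \in H \/ H \subset <[x]>.
  move=> x Gx; have := cmp <[x]>%G; rewrite cycle_subG Gx cycle_cyclic.
  by case=> // [|->]; [rewrite cycle_subG; left|right].
have Gc : forall (pi : nat_pred) y, y \in G -> y.`_pi \in G.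
  by move=> pi y Gy; apply: (subsetP _ _ (cycle_constt pi y)); rewrite cycle_subG.
set p := pdiv #|H|.
have pr : prime p by rewrite pdiv_prime // cardG_gt1.
have pH : p %| #|H| by exact: pdiv_dvd.
have nsub : ~~ (G \subset H).
  by apply: contra nHG => sGH; rewrite eqEsubset sHG sGH.
have [x Gx xH] := subsetPn nsub.
have p'H : forall y, ~~ (H \subset <[y.`_p^']>).
  move=> y; apply/negP => sH.
  have : p^'.-group H.
    by apply: pgroupS sH _; rewrite /pgroup -orderE; exact: p_elt_constt.
  by rewrite /pgroup p'natE // pH.
have pgH : p.-group H.
  have xp'H : x.`_p^' \in H.
    by have [//|sH] := elt _ (Gc p^' _ Gx); case/negP: (p'H x).
  have xpH : x.`_p \notin H.
    by apply: contra xH => xpH; rewrite -(consttC p x) groupM.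
  have [xpH'|sHp] := elt _ (Gc p _ Gx); first by rewrite xpH' in xpH.
  by apply: pgroupS sHp _; rewrite /pgroup -orderE; exact: p_elt_constt.
have pG : p.-group G.
  apply/pgroupP => q qpr qG; have [y Gy oy] := Cauchy qpr qG.
  have [yH|sHy] := elt y Gy.
    apply: (pgroupP pgH) => //; rewrite -oy orderE cardSg // cycle_subG //.
  have : p %| q by rewrite -oy orderE (dvdn_trans pH) // cardSg.
  by rewrite dvdn_prime2 // inE eq_sym.
have oH : #|H| = p.
  have [y Hy oy] := Cauchy pr pH.
  have bY : breaking_point G <[y]>%G.
    split => /=.
    - by rewrite cycle_subG (subsetP sHG).
    - exact: cycle_cyclic.
    - by rewrite trivg_card1 -orderE oy; case: (p) pr => [|[]].
    - apply: contra nHG => /eqP E.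
      by rewrite eqEsubset sHG -E cycle_subG.
    move=> X sXG cX; have [sXH|sHX] := cmp X sXG cX; last first.
      by right; apply: subset_trans sHX; rewrite cycle_subG.
    have [->|ntX] := eqVneq X 1%G; first by left; rewrite sub1G.
    right; have pX : p.-group X by apply: pgroupS sXH pgH.
    have [_ pX' _] := pgroup_pdiv pX ntX.
    have [z Xz oz] := Cauchy pr pX'.
    have Hz : z \in H by apply: (subsetP sXH).
    have E : <[z]> = <[y]>.
      apply/eqP; rewrite (eq_subG_cyclic cH) ?cycle_subG //.
      by rewrite -!orderE oz oy.
    by rewrite -E cycle_subG.
  by rewrite -(uH _ bY) /= -orderE oy.
have ntG : G :!=: 1.
  by apply: contraNneq ntH => G1; apply/eqP/trivgP; rewrite -G1.
have oO : #|'Ohm_1(G)| = p.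
  apply/(prime_nt_dvdP pr); first by rewrite -trivg_card1 Ohm1_eq1.
  rewrite -oH; apply: cardSg; change ('Ohm_1(G) \subset H); rewrite Ohm1Eprime gen_subG; apply/subsetP => y.
  rewrite inE => /andP [Gy pry].
  have [//|sHy] := elt y Gy.
  have E : H :==: <[y]>.
    rewrite eqEcard sHy -orderE oH; apply: dvdn_leq; first exact: prime_gt0.
    have : #|H| %| #[y] by rewrite orderE cardSg.
    by rewrite oH dvdn_prime2 // => /eqP ->.
  by rewrite (eqP E) cycle_id.
have := introT (prime_Ohm1P pG ntG) oO.
case/orP => [cG | /andP [/eqP p2 /eqP cls]]; last first.
  by right; have [n n2 iso] := (quaternion_classP G).1 cls; exists n.
left; exists p; split => //; split => //.
have [k oG] := p_natP pG.
case: k oG => [|[|[|m]]] oG //.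
- by rewrite trivg_card1 oG in ntG.
- by rewrite eqEcard sHG oG oH expn1 leqnn in nHG.
have lg : 2 <= logn p #|G| by rewrite oG pfactorK.
have [L [sLG _ oL]] := normal_pgroup pG (normal_refl G) lg.
have bL : breaking_point G L.
  split => //.
  - exact: cyclicS sLG cG.
  - by rewrite trivg_card1 oL -(expn0 p) eqn_exp2l ?prime_gt1.
  - apply/eqP => E; have := congr1 (fun A : {set gT} => #|A|) E.
    by rewrite oL oG; move/eqP; rewrite eqn_exp2l ?prime_gt1.
  move=> X sXG _; have [a oX] := p_natP (pgroupS sXG pG).
  case: (leqP a 2) => ha.
    by left; rewrite -(cardSg_cyclic cG sXG sLG) oX oL dvdn_exp2l.
  by right; rewrite -(cardSg_cyclic cG sLG sXG) oX oL dvdn_exp2l // ltnW.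
have := uH _ bL => E.
by move: oL; rewrite E oH; move/eqP; rewrite -{1}(expn1 p) eqn_exp2l ?prime_gt1.
Qed.
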